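(* Suppose we have $n\ge3$ agents with additive, identical, normalized valuations, provided with a prediction of accuracy $\eta<1-\frac{1}{2(n-1+2a)}$ for some given $a\in(0,1]$; that is, the allowed error between the prediction and the true valuation is $1-\eta>\frac{1}{2(n-1+2a)}$. Then there is no online algorithm that guarantees an $a$-EFX allocation for all instances with error at most $1-\eta$, even when $T'=T=n+1$ and the prediction and the true valuation are $3$-value functions.
   Context: Online fair division with predictions and identical valuations: agents $[n]$; goods $g_1,\dots,g_T$ arrive one per time step; all agents share a true additive normalized valuation $v$ ($v(g_t)\ge0$, $\sum_{t\in[T]}v(g_t)=1$, $v(S)=\sum_{g\in S}v(g)$), and before any arrival the algorithm receives a prediction $p=(p(g_1),\dots,p(g_{T'}))$ (an additive normalized valuation over $T'$ predicted goods) and the accuracy level. Error $\frac12\sum_{t=1}^{\max\{T,T'\}}|p(g_t)-v(g_t)|$ (missing entries set to $0$); accuracy $\eta$ means the error is at most $1-\eta$. At time $t$, $v(g_t)$ is revealed and $g_t$ must be irrevocably allocated. For $S\ne\emptyset$, $\bar S=S\setminus\{g\}$ with $g\in\arg\max_{g'\in S}v(S\setminus\{g'\})$, $\bar\emptyset=\emptyset$. An allocation is $a$-EFX if $v(A_i)\ge a\cdot v(\bar A_j)$ for all $i,j$. A function is $k$-value if it takes at most $k$ distinct values. *)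

(* Defs.v *)
From mathcomp Require Import all_boot all_order all_algebra.
Set Implicit Arguments. Unset Strict Implicit. Unset Printing Implicit Defensive.
Import Order.TTheory GRing.Theory Num.Theory.
Local Open Scope ring_scope.

Section OnlineFD.
Variable R : realFieldType.

Definition normalized (T : nat) (v : 'I_T -> R) : Prop :=
  (forall t, 0 <= v t) /\ \sum_(t < T) v t = 1.

Definition kvalue (k : nat) (T : nat) (v : 'I_T -> R) : Prop :=
  (size (undup [seq v t | t <- enum 'I_T]) <= k)%N.

Definition pred_error (T : nat) (p v : 'I_T -> R) : R :=
  2^-1 * \sum_(t < T) `|p t - v t|.

Definition bval (T : nat) (v : 'I_T -> R) (S : {set 'I_T}) : R :=
  \sum_(t in S) v t.

Definition bval_bar (T : nat) (v : 'I_T -> R) (S : {set 'I_T}) : R :=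
  if S == set0 then 0
  else \big[Order.max/0]_(g in S) bval v (S :\ g).

Definition bundle (n T : nat) (alloc : 'I_T -> 'I_n) (i : 'I_n) : {set 'I_T} :=
  [set t | alloc t == i].

Definition aEFX (n T : nat) (a : R) (v : 'I_T -> R) (alloc : 'I_T -> 'I_n) : Prop :=
  forall i j : 'I_n, a * bval_bar v (bundle alloc j) <= bval v (bundle alloc i).

(* A deterministic online algorithm (for n agents, T goods, T' = T predicted
   goods): given the prediction p (the accuracy level and n, T are fixed
   parameters known to it) and the sequence of values v(g_1),...,v(g_t)
   revealed so far, it outputs the agent receiving g_t. *)
Definition online_alg (n T : nat) := ('I_T -> R) -> seq R -> 'I_n.

Definition run_alg (n T : nat) (alg : online_alg n T) (p v : 'I_T -> R)
  : 'I_T -> 'I_n :=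
  fun t => alg p (take t.+1 [seq v s | s <- enum 'I_T]).

End OnlineFD.

(* Main.v *)
Require Import Defs.
From mathcomp Require Import all_boot all_order all_algebra.
From mathcomp Require Import ring lra zify.
Import Order.TTheory GRing.Theory Num.Theory.
Local Open Scope ring_scope.

Section Aux.
Variable R : realFieldType.

Lemma bar_ge (T : nat) (v : 'I_T -> R) (S : {set 'I_T}) (x y : 'I_T) :
  (forall t, 0 <= v t) -> x \in S -> y \in S -> x != y ->
  v y <= bval_bar v S.
Proof.
move=> v0 xS yS xy; rewrite /bval_bar.
have -> : (S == set0) = false.
  by apply/negbTE/set0Pn; exists x.
apply: le_trans (le_bigmax_cond _ _ xS).
rewrite /bval (bigD1 y) /=; last by rewrite !inE eq_sym xy yS.
rewrite lerDl; apply: sumr_ge0 => i _; exact: v0.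
Qed.

Lemma key (n : nat) (a c : R) (v : 'I_n.+1 -> R) (f : 'I_n.+1 -> 'I_n)
  (x y z : 'I_n.+1) :
  0 < a -> (forall t, 0 <= v t) -> x != y -> f x = f y -> c <= v y ->
  z != x -> z != y -> v z < a * c -> ~ aEFX a v f.
Proof.
move=> a0 v0 xy fxy cy zx zy vz H.
have barA : c <= bval_bar v (bundle f (f y)).
  apply: (le_trans cy); apply: (@bar_ge _ v _ x y) => //.
  - by rewrite inE fxy.
  - by rewrite inE.
have acb : a * c <= a * bval_bar v (bundle f (f y)) by rewrite ler_pM2l.
case: (pickP (fun w => (w != z) && (f w == f z))) => [w /andP[wz /eqP fw] | none].
- have [q qS fq] : exists2 q, (q != y) && (q != z) & f q = f z.
    case: (eqVneq w y) => [ey|wy].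
    + by exists x; rewrite ?xy ?(eq_sym x z) ?zx // fxy -ey fw.
    + by exists w; rewrite ?wy ?wz.
  pose S := [set t | (t != y) && (t != z)].
  have cS : (#|S| <= n.-1)%N.
    have : (#|S| + 2 <= n.+1)%N.
      have -> : #|S| = #|[set: 'I_n.+1] :\ y :\ z|.
        by apply: eq_card => t; rewrite !inE andbC andbT.
      have h1 := cardsD1 z ([set: 'I_n.+1] :\ y).
      have h2 := cardsD1 y [set: 'I_n.+1].
      rewrite cardsT card_ord in h2.
      rewrite !inE zy /= in h1.
      rewrite inE /= h1 in h2. by rewrite [X in (_ <= X)%N]h2 addnC addnA.
    lia.
  have : ~~ ([set: 'I_n] \subset f @: S).
    apply/negP => /subset_leq_card; rewrite cardsT card_ord => h.
    have := leq_trans h (leq_trans (leq_imset_card _ _) cS).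
    have : (0 < n)%N by case: (n) (f x) => [[]|].
    lia.
  case/subsetPn => e _ eS.
  have be : bundle f e = set0.
    apply/setP => t; rewrite !inE; apply/negP => /eqP fte.
    move/negP: eS; apply; rewrite -fte.
    case: (boolP ((t != y) && (t != z))) => ht; first by apply: imset_f; rewrite inE.
    move: ht; rewrite negb_and !negbK => /orP[] /eqP ->.
    + by rewrite -fxy; apply: imset_f; rewrite inE xy eq_sym zx.
    + by rewrite -fq; apply: imset_f; rewrite inE.
  have := H e (f y); rewrite /bval be big_set0.
  have := v0 z; lra.
- have bz : bundle f (f z) = [set z].
  apply/setP => t; rewrite !inE.
  case: (eqVneq t z) => [->|tz]; first by rewrite eqxx.
  by have := none t; rewrite tz /=.
  have := H (f z) (f y); rewrite /bval bz big_set1; lra.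
Qed.


Definition Vof (n : nat) (w : nat -> R) (i : nat) : R :=
  if i == n then 1 - \sum_(j < n) w j else w i.
Definition vof (n : nat) (w : nat -> R) : 'I_n.+1 -> R := fun u => Vof n w u.

Lemma sum_w (n : nat) (w : nat -> R) (m : R) :
  (forall i, 0 <= w i <= m) -> 0 <= \sum_(j < n) w j <= n%:R * m.
Proof.
move=> hw; apply/andP; split.
  by apply: sumr_ge0 => j _; case/andP: (hw j).
have -> : n%:R * m = \sum_(j < n) m by rewrite sumr_const card_ord mulr_natl.
by apply: ler_sum => j _; case/andP: (hw j).
Qed.

Lemma norm_vof (n : nat) (w : nat -> R) (m : R) :
  (forall i, 0 <= w i <= m) -> n%:R * m <= 1 -> normalized (vof n w).
Proof.
move=> hw hm; have /andP[s0 s1] := @sum_w n w m hw; split.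
  move=> u; rewrite /vof /Vof; case: eqP => _; first by lra.
  by case/andP: (hw u).
rewrite big_ord_recr /= /vof /Vof eqxx.
have -> : \sum_(i < n) (if widen_ord (leqnSn n) i == n :> nat then 1 - \sum_(j < n) w j
     else w (widen_ord (leqnSn n) i)) = \sum_(j < n) w j.
  apply: eq_bigr => i _ /=; by rewrite (ltn_eqF (ltn_ord i)).
lra.
Qed.

Lemma kval (T : nat) (v : 'I_T -> R) (al be ga : R) :
  (forall u, v u \in [:: al; be; ga]) -> kvalue 3 v.
Proof.
move=> hv; rewrite /kvalue.
have -> : 3%N = size [:: al; be; ga] by [].
apply: uniq_leq_size; first exact: undup_uniq.
move=> r; rewrite mem_undup => /mapP [u _ ->]; exact: hv.
Qed.

Lemma err_vof (n : nat) (w1 w2 : nat -> R) (m : R) :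
  (forall i, 0 <= w1 i <= m) -> (forall i, 0 <= w2 i <= m) ->
  pred_error (vof n w1) (vof n w2) <= n%:R * m.
Proof.
move=> h1 h2; rewrite /pred_error big_ord_recr /= /vof /Vof eqxx.
have -> : \sum_(i < n) `|(if widen_ord (leqnSn n) i == n :> nat then 1 - \sum_(j < n) w1 j
     else w1 (widen_ord (leqnSn n) i)) - (if widen_ord (leqnSn n) i == n :> nat then 1 - \sum_(j < n) w2 j
     else w2 (widen_ord (leqnSn n) i))| = \sum_(j < n) `|w1 j - w2 j|.
  apply: eq_bigr => i _ /=; by rewrite (ltn_eqF (ltn_ord i)).
have hs : \sum_(j < n) `|w1 j - w2 j| <= n%:R * m.
  have -> : n%:R * m = \sum_(j < n) m by rewrite sumr_const card_ord mulr_natl.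
  apply: ler_sum => j _; rewrite ler_norml.
  case/andP: (h1 j) => a1 b1; case/andP: (h2 j) => a2 b2.
  apply/andP; split; lra.
have /andP[s1 t1] := @sum_w n w1 m h1; have /andP[s2 t2] := @sum_w n w2 m h2.
have hl : `|(1 - \sum_(j < n) w1 j) - (1 - \sum_(j < n) w2 j)| <= n%:R * m.
  rewrite ler_norml; apply/andP; split; lra.
lra.
Qed.

Lemma map_vof (n : nat) (w : nat -> R) :
  [seq vof n w u | u <- enum 'I_n.+1] = map (Vof n w) (iota 0 n.+1).
Proof. by rewrite -val_enum_ord -map_comp. Qed.

Lemma prefix_eq (n : nat) (alg : online_alg R n n.+1) (p : 'I_n.+1 -> R)
  (w1 w2 : nat -> R) (k : nat) (t : 'I_n.+1) :
  (forall i, (i < k)%N -> Vof n w1 i = Vof n w2 i) -> (t < k)%N ->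
  run_alg alg p (vof n w1) t = run_alg alg p (vof n w2) t.
Proof.
move=> hw tk; rewrite /run_alg !map_vof -!map_take take_iota.
congr (alg p _); apply/eq_in_map => i; rewrite mem_iota add0n => /andP[_ hi].
apply: hw; apply: (leq_trans hi); rewrite geq_min; lia.
Qed.


Lemma kv_of (n : nat) (w : nat -> R) (al be : R) :
  (forall i, w i \in [:: al; be]) -> kvalue 3 (vof n w).
Proof.
move=> hw; apply: (@kval _ _ (1 - \sum_(j < n) w j) al be) => u.
rewrite /vof /Vof; case: eqP => _; first by rewrite inE eqxx.
by move: (hw u); rewrite !inE => ->; rewrite orbT.
Qed.

End Aux.
Arguments Vof {R}. Arguments vof {R}.
Arguments norm_vof {R n w m}. Arguments err_vof {R n w1 w2 m}.
Arguments kv_of {R n w}. Arguments prefix_eq {R n alg p w1 w2 k t}.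
Arguments key {R n a c v f x y z}.

Ltac nlia :=
  repeat match goal with
  | H : ?T |- _ =>
      lazymatch T with
      | is_true (leq _ _) => fail
      | @eq nat _ _ => fail
      | nat => fail
      | 'I_ _ => fail
      | _ => clear H
      end
  end; lia.

Theorem lemma4p7 (R : realFieldType) (n : nat) (a eta : R) :
  (3 <= n)%N -> 0 < a <= 1 ->
  1 / (2 * (n%:R - 1 + 2 * a)) < 1 - eta ->
  forall alg : online_alg R n n.+1,
  exists p v : 'I_n.+1 -> R,
    [/\ normalized p, normalized v, kvalue 3 p & kvalue 3 v] /\
    pred_error p v <= 1 - eta /\
    ~ aEFX a v (run_alg alg p v).

Proof.
move=> hn /andP[a0 a1] hb alg.
set d := 1 - eta in hb *.
have hn3 : 3%:R <= n%:R :> R by rewrite ler_nat.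
have d0 : 0 < d.
  apply: lt_trans hb; apply: divr_gt0; first lra.
  have : 0 < n%:R - 1 + 2 * a :> R by lra.
  move=> h; apply: mulr_gt0 => //; lra.
set D := d / (1 + 2 * d).
have eD : D * (1 + 2 * d) = d by rewrite /D divfK //; apply: lt0r_neq0; lra.
have D0 : 0 < D by rewrite /D divr_gt0 //; lra.
have Dd : D <= d.
  have : 0 < 2 * d * D by rewrite mulr_gt0 // mulr_gt0.
  have : d = D + 2 * d * D by rewrite -{1}eD; ring.
  lra.
have Dh : D < 1 / 2.
  have h : (1 - 2 * D) * (1 + 2 * d) = 1.
    have -> : (1 - 2 * D) * (1 + 2 * d) = 1 + 2 * d - 2 * (D * (1 + 2 * d)) by ring.
    rewrite eD; ring.
  have : 0 < 1 - 2 * D.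
    have h2 : 0 < 1 + 2 * d by lra.
    by rewrite -(pmulr_lgt0 _ h2) h.
  lra.
have n0 : n%:R != 0 :> R by rewrite pnatr_eq0; nlia.
set m := D / n%:R.
have nm : n%:R * m = D by rewrite /m mulrC divfK.
have m0 : 0 < m by rewrite /m divr_gt0 // ltr0n; nlia.
have mD : m <= D.
  rewrite -nm ler_peMl //; first exact: ltW.
  apply: le_trans hn3; lra.
set s := a * m / 2.
set s' := a * s / 2.
have am0 : 0 < a * m by rewrite mulr_gt0.
have as0 : 0 < a * s by rewrite mulr_gt0 // /s; lra.
have sm : s <= m.
  rewrite /s; have : a * m <= m by rewrite ler_piMl //; exact: ltW.
  lra.
have s'm : s' <= m.
  rewrite /s'; have : a * s <= s by rewrite ler_piMl //; rewrite /s; lra.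
  lra.
have s0 : 0 < s by rewrite /s; lra.
have s'0 : 0 < s' by rewrite /s'; lra.
pose w0 := fun i : nat => if i == n.-1 then m else s.
pose wk := fun k i : nat => if i == k then s' else s.
have hw0 : forall i, 0 <= w0 i <= m.
  move=> i; rewrite /w0; case: eqP => _; apply/andP; split; lra.
have hwk : forall k i, 0 <= wk k i <= m.
  move=> k i; rewrite /wk; case: eqP => _; apply/andP; split; lra.
set p := vof n w0.
have nm1 : n%:R * m <= 1 by rewrite nm; lra.
have fin : forall w (al be : R), (forall i, 0 <= w i <= m) ->
    (forall i, w i \in [:: al; be]) ->
    ~ aEFX a (vof n w) (run_alg alg p (vof n w)) ->
  exists p0 v : 'I_n.+1 -> R,
    [/\ normalized p0, normalized v, kvalue 3 p0 & kvalue 3 v] /\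
    pred_error p0 v <= 1 - eta /\ ~ aEFX a v (run_alg alg p0 v).
  move=> w al be hw hin hne; exists p, (vof n w); split; last split => //.
  - split; [exact: (norm_vof hw0) | exact: (norm_vof hw) | | exact: (kv_of _ _ hin)].
    apply: (@kv_of _ _ _ m s) => i; rewrite /w0; case: eqP => _; by rewrite !inE eqxx ?orbT.
  - apply: le_trans (err_vof hw0 hw) _; rewrite nm; exact: Dd.
set f0 := run_alg alg p (vof n w0).
have [x [y [xy fxy]]] : exists x y : 'I_n.+1, (x < y)%N /\ f0 x = f0 y.
  have ninj : ~~ injectiveb f0.
    by apply/negP => /injectiveP inj; have := leq_card f0 inj; rewrite !card_ord ltnn.
  have [x [y xy fxy]] := elimT (injectivePn f0) ninj.
  case: (ltngtP x y) => [lt|gt|eq].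
  - by exists x, y.
  - by exists y, x.
  - by move: xy; rewrite (val_inj eq) eqxx.
have yn : (y <= n)%N by rewrite -ltnS.
have x_neq_y : x != y by rewrite neq_ltn xy.
case: (ltnP y n.-1) => [ylt | yge].
-
  set k := y.+1.
  have kn : (k < n.+1)%N by rewrite /k; nlia.
  have hpre : forall i, (i < k)%N -> Vof n w0 i = Vof n (wk k) i.
    move=> i ik; rewrite /Vof /w0 /wk.
    have -> : (i == n) = false by apply/negbTE; rewrite neq_ltn; apply/orP; left; rewrite /k in ik; nlia.
    have -> : (i == n.-1) = false by apply/negbTE; rewrite neq_ltn; apply/orP; left; rewrite /k in ik; nlia.
    by rewrite ltn_eqF.
  apply: (fin (wk k) s' s (hwk k)).
    by move=> i; rewrite /wk; case: eqP => _; rewrite !inE eqxx ?orbT.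
  pose z : 'I_n.+1 := Ordinal kn.
  apply: (key (x := x) (y := y) (z := z) (c := s)) => //.
  - move=> t; rewrite /vof /Vof; case: eqP => _.
      have /andP[] := @sum_w _ n (wk k) m (hwk k); rewrite nm; lra.
    by case/andP: (hwk k t).
  - rewrite -(prefix_eq (w1 := w0) (k := k)) //; last by rewrite /k; nlia.
    rewrite -(prefix_eq (w1 := w0) (k := k)) //.
  - rewrite /vof /Vof.
    have -> : (y == n :> nat) = false by apply/negbTE; rewrite neq_ltn; nlia.
    by rewrite /wk ltn_eqF.
  - by rewrite -val_eqE /= neq_ltn /k; nlia.
  - by rewrite -val_eqE /= neq_ltn /k; nlia.
  - rewrite /vof /Vof /= /wk.
    have -> : (k == n) = false by apply/negbTE; rewrite neq_ltn; nlia.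
    rewrite eqxx /s'; lra.
-
  have n1 : (1 < n.+1)%N by nlia.
  set z : 'I_n.+1 := if val x == 0%N then Ordinal n1 else ord0.
  have zx : z != x.
    rewrite /z; case: (eqVneq (val x) 0%N) => hx /=.
    + by apply/eqP => e; move: hx; rewrite -e.
    + by apply/eqP => e; move: hx; rewrite -e eqxx.
  have zv : (val z <= 1)%N by rewrite /z; case: eqP.
  have zy : z != y.
    apply/eqP => e; move: zv; rewrite e /=; nlia.
  have vz : vof n w0 z = s.
    rewrite /vof /Vof /w0.
    have -> : (val z == n) = false by apply/negbTE; rewrite neq_ltn; nlia.
    have -> : (val z == n.-1) = false by apply/negbTE; rewrite neq_ltn; nlia.
    done.
  have v0 : forall t, 0 <= vof n w0 t.
    move=> t; rewrite /vof /Vof; case: eqP => _.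
      have /andP[] := @sum_w _ n w0 m hw0; rewrite nm; lra.
    by case/andP: (hw0 t).
  apply: (fin w0 m s hw0).
    by move=> i; rewrite /w0; case: eqP => _; rewrite !inE eqxx ?orbT.
  have [yeq | yeq] : (y : nat) = n.-1 \/ (y : nat) = n by nlia.
  + apply: (key (x := x) (y := y) (z := z) (c := m)) => //.
    * rewrite /vof /Vof /w0 yeq.
      have -> : (n.-1 == n) = false by apply/negbTE; rewrite neq_ltn; nlia.
      by rewrite eqxx.
    * rewrite vz /s.
      have : a * m / 2 < a * m by lra.
      done.
  + have hL : 1 / 2 <= vof n w0 y.
      rewrite /vof /Vof yeq eqxx.
      have /andP[] := @sum_w _ n w0 m hw0; rewrite nm; lra.
    apply: (key (x := x) (y := y) (z := z) (c := vof n w0 y)) => //.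
    rewrite vz /s.
    have : a * m < a * (vof n w0 y).
      by rewrite ltr_pM2l //; lra.
    lra.
Qed.
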